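(* Let $r\in\mathbb{N}$ with $r\ge2$, $v\in\mathbb{YF}^r$ and $u\in\mathbb{YF}$. Then $$\sum_{w\in S_r(u)} d_r(w,v)=r^{d(v)-d(u)}\, d_1(u,s(v)),$$ where $S_r(u)=\{w\in\mathbb{YF}^r: s(w)=u\}$.
   Context: Fix $r\in\mathbb{N}$. Words and statistics. Consider finite words over $\{1_1,\dots,1_r,2\}$. A letter $1_i$ is a one with digit value $1$; $2$ is a two with digit value $2$. $|x|$ is the sum of digit values, $d(x)$ the number of twos. The graph $\mathbb{YF}^r$. It is the graded graph on all finite words, graded by $|\cdot|$. From $x$ there is a downward edge to every word obtained by one of two operations: (i) delete the leftmost one; (ii) replace a $2$ lying left of the leftmost one (any $2$ if there are no ones) by $1_i$, with arbitrary $i$. $\mathbb{YF}=\mathbb{YF}^1$ (with $1:=1_1$), the Young–Fibonacci graph. $s:\mathbb{YF}^r\to\mathbb{YF}$ replaces every $1_i$ by $1$. Path counts. $d_r(x,y)$ is the number of downward paths $y=y_n\to\dots\to y_m=x$ in $\mathbb{YF}^r$ with $|y_i|=i$ ($0$ if none); $d_1$ is the count in $\mathbb{YF}$. *)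

(* Defs.v *)
From mathcomp Require Import all_boot all_order all_algebra.
Set Implicit Arguments. Unset Strict Implicit. Unset Printing Implicit Defensive.

(* Letters of YF^r: [Some i] is the one 1_i (i : 'I_r), [None] is the two 2. *)
Definition letter (r : nat) := option 'I_r.
Definition word (r : nat) := seq (letter r).

Definition is_one r (a : letter r) : bool := if a is Some _ then true else false.

Definition digit r (a : letter r) : nat := if a is Some _ then 1 else 2.

Definition rank r (x : word r) : nat := sumn (map (@digit r) x).

Definition ntwos r (x : word r) : nat := count (fun a : letter r => ~~ is_one a) x.

Definition delete_at (T : Type) (k : nat) (s : seq T) : seq T := take k s ++ drop k.+1 s.

(* Downward neighbours of x in YF^r.  Let k be the position of the leftmost one
   (k = size x if there is none).  Every letter at a position j < k is a two.
   (i) delete the leftmost one;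
   (ii) replace a two at a position j < k (i.e. left of the leftmost one, or any
        two if there are no ones) by 1_i, for any i. *)
Definition children r (x : word r) : seq (word r) :=
  let k := find (@is_one r) x in
  undup ((if k < size x then [:: delete_at k x] else [::]) ++
         [seq set_nth None x j (Some i) | j <- iota 0 k, i <- enum 'I_r]).

Fixpoint npaths r (n : nat) (x y : word r) : nat :=
  match n with
  | 0 => (x == y : nat)
  | n'.+1 => sumn [seq npaths n' x c | c <- children y]
  end.

(* d_r(x, y): number of downward paths y = y_n -> ... -> y_m = x with |y_i| = i. *)
Definition dpaths r (x y : word r) : nat :=
  if rank x <= rank y then npaths (rank y - rank x) x y else 0.

(* s : YF^r -> YF, replacing every 1_i by 1 (= 1_1, encoded as ord0 : 'I_1). *)
Definition s_letter r (a : letter r) : letter 1 :=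
  if a is Some _ then Some ord0 else None.
Definition s_word r (x : word r) : word 1 := map (@s_letter r) x.

(* Main.v *)
Require Import Defs.
From mathcomp Require Import all_boot all_order all_algebra.
From mathcomp Require Import zify.
Import GRing.Theory Num.Theory.

Section S.
Variable r : nat.

Lemma nth_before (x : word r) j : j < find (@is_one r) x -> nth None x j = None.
Proof. by move=> /(before_find None); case: (nth None x j). Qed.

Lemma children_uniq (x : word r) :
  uniq ((if find (@is_one r) x < size x then [:: delete_at (find (@is_one r) x) x] else [::]) ++
         [seq set_nth None x j (Some i) | j <- iota 0 (find (@is_one r) x), i <- enum 'I_r]).
Proof.
set k := find _ x.
have szB : forall c, c \in [seq set_nth None x j (Some i) | j <- iota 0 k, i <- enum 'I_r] -> size c = size x.
  move=> c /allpairsP [[j i] /= []]; rewrite mem_iota add0n => /andP[_ jk] _ ->.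
  rewrite size_set_nth; apply/maxn_idPr; exact: leq_trans jk (find_size _ _).
rewrite cat_uniq; apply/and3P; split.
- by case: ifP.
- apply/hasPn => c /szB szc; case: ifP => // kx; rewrite inE; apply/negP => /eqP ce.
  move: szc; rewrite ce /delete_at size_cat size_take kx size_drop.
  move: kx; rewrite -/k; clearbody k; clear szB ce; move: (size x) => m; lia.
- apply: (@allpairs_uniq _ _ _ (fun j (i : 'I_r) => set_nth None x j (Some i))); [exact: iota_uniq | exact: enum_uniq |].
  move=> [j1 i1] [j2 i2] /allpairsP [[j1' i1'] /= [+ _ [-> ->]]] /allpairsP [[j2' i2'] /= [+ _ [-> ->]]].
  rewrite !mem_iota !add0n /= => h1 h2 e.
  have := congr1 (fun s => nth None s j1') e; rewrite !nth_set_nth /= eqxx.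
  case: eqP => [<- [->] //|_]; by rewrite nth_before.
Qed.

Lemma children_sum (x : word r) (g : word r -> nat) :
  \sum_(c <- children x) g c =
  (if find (@is_one r) x < size x then g (delete_at (find (@is_one r) x) x) else 0) +
  \sum_(j <- iota 0 (find (@is_one r) x)) \sum_(i <- enum 'I_r) g (set_nth None x j (Some i)).
Proof.
rewrite /children undup_id ?children_uniq // big_cat big_allpairs_dep.
by case: ifP => _; rewrite ?big_seq1 ?big_nil.
Qed.

Lemma sumn_children (x : word r) (g : word r -> nat) :
  sumn [seq g c | c <- children x] = \sum_(c <- children x) g c.
Proof. by rewrite sumnE big_map. Qed.

Lemma find_s (x : word r) : find (@is_one 1) (s_word x) = find (@is_one r) x.
Proof. by rewrite find_map; apply: eq_find => -[]. Qed.

Lemma size_s (x : word r) : size (s_word x) = size x.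
Proof. exact: size_map. Qed.

Lemma ntwos_s (x : word r) : ntwos (s_word x) = ntwos x.
Proof. by rewrite /ntwos count_map; apply: eq_count => -[]. Qed.

Lemma rank_s (x : word r) : rank (s_word x) = rank x.
Proof. by rewrite /rank /s_word -map_comp; congr sumn; apply: eq_map => -[]. Qed.

Lemma s_delete k (x : word r) : s_word (delete_at k x) = delete_at k (s_word x).
Proof. by rewrite /s_word /delete_at map_cat map_take map_drop. Qed.

Lemma s_set j i (x : word r) : j < size x ->
  s_word (set_nth None x j (Some i)) = set_nth None (s_word x) j (Some ord0).
Proof.
move=> jx; rewrite !set_nthE size_s jx.
by rewrite /s_word map_cat map_take /= map_drop.
Qed.

Lemma ntwos_delete (x : word r) : find (@is_one r) x < size x ->
  ntwos (delete_at (find (@is_one r) x) x) = ntwos x.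
Proof.
move=> kx; have hx : has (@is_one r) x by rewrite has_find.
have := nth_find None hx; set k := find _ x => h.
rewrite /ntwos /delete_at -[in RHS](cat_take_drop k x) [in RHS](drop_nth None kx) !count_cat /=.
by case: (nth None x k) h => //= _ _; rewrite add0n.
Qed.

Lemma ntwos_pos (x : word r) j : j < find (@is_one r) x -> 0 < ntwos x.
Proof.
move=> jk; have jx : j < size x by apply: leq_trans jk (find_size _ _).
by rewrite /ntwos -has_count; apply/(has_nthP None); exists j => //; rewrite nth_before.
Qed.

Lemma ntwos_set (x : word r) j i : j < find (@is_one r) x ->
  (ntwos (set_nth None x j (Some i))).+1 = ntwos x.
Proof.
move=> jk; have jx : j < size x by apply: leq_trans jk (find_size _ _).
have pos : 0 < ntwos x.
  by rewrite /ntwos -has_count; apply/(has_nthP None); exists j => //; rewrite nth_before.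
rewrite /ntwos count_set_nth_ltn // nth_before //=.
move: pos; rewrite /ntwos; lia.
Qed.

Lemma sum_const_ord (c : nat) : \sum_(i <- enum 'I_r) c = r * c.
Proof. by rewrite big_enum sum_nat_const card_ord. Qed.

Lemma npaths_twos n (x y : word r) : ntwos y < ntwos x -> npaths n x y = 0.
Proof.
elim: n y => [|n IH] y lt /=.
  by case: eqP lt => // ->; rewrite ltnn.
rewrite sumn_children children_sum; set k := find _ y.
rewrite big1_seq ?addn0.
  by case: ifP => // ky; rewrite IH // ntwos_delete.
move=> j; rewrite mem_iota add0n /= => jk; apply: big1 => i _; apply: IH.
by apply: (ltn_trans _ lt); rewrite -(ntwos_set _ _ i jk).
Qed.

End S.

Lemma key r (u : word 1) n (v : word r) :
  (\sum_(w : (size u).-tuple (letter r) | s_word (tval w) == u) npaths n (tval w) v) * r ^ ntwos u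
  = r ^ ntwos v * npaths n u (s_word v).
Proof.
elim: n v => [|n IH] v /=.
  case: (eqVneq (size v) (size u)) => [e|ne]; last first.
    rewrite big1; last by move=> w _; case: eqP => // ev; case/negP: ne; rewrite -ev size_tuple.
    case: eqP => eu; [by case/negP: ne; rewrite eu size_s | by rewrite muln0].
  pose tv : (size u).-tuple (letter r) := Tuple (introT eqP e).
  case: (eqVneq (s_word v) u) => [su|su].
    rewrite (bigD1 tv) /=; last by rewrite su.
    rewrite big1 => [|w /andP[_ wt]]; last by case: eqP => // ewv; case/eqP: wt; apply: val_inj.
    case: eqP => // _; by rewrite /= -su ntwos_s mul1n muln1.
  rewrite big1 ?muln0 // => w /eqP sw; case: (tval w =P v) => // ewv.
  by case/negP: su; rewrite -sw ewv.
rewrite (eq_bigr (fun w => \sum_(c <- children v) npaths n (tval w) c)); last by move=> w _; rewrite sumn_children.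
rewrite exchange_big /= big_distrl /=.
rewrite (eq_bigr (fun c => r ^ ntwos c * npaths n u (s_word c))); last by move=> c _; rewrite IH.
rewrite sumn_children !children_sum find_s size_s mulnDr.
set k := find _ v.
congr (_ + _).
  by case: ifP => kv; rewrite ?muln0 // /k ntwos_delete // s_delete.
rewrite big_distrr /=; apply: eq_big_seq => j; rewrite mem_iota add0n /= => jk.
have jv : j < size v by apply: leq_trans jk (find_size _ _).
rewrite (eq_bigr (fun _ => r ^ (ntwos v).-1 * npaths n u (set_nth None (s_word v) j (Some ord0)))); last first.
  move=> i _; rewrite s_set // -(ntwos_set _ _ _ i jk) /=; done.
rewrite sum_const_ord.
rewrite (eq_bigr (fun _ => npaths n u (set_nth None (s_word v) j (Some ord0)))); last first.
  by move=> i _; rewrite (ord1 i).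
rewrite big_enum sum_nat_const card_ord mul1n mulnA.
have := ntwos_pos _ _ _ jk; case: (ntwos v) => // d _ /=.
by rewrite expnS mulnC.
Qed.

Local Open Scope ring_scope.

Theorem mainTheorem8 (r : nat) (hr : (2 <= r)%N) (v : word r) (u : word 1) :
  ((\sum_(w : (size u).-tuple (letter r) | s_word (tval w) == u)
      dpaths (tval w) v)%N)%:R
  = ((r%:R : rat) ^ ((ntwos v)%:Z - (ntwos u)%:Z)) * (dpaths u (s_word v))%:R.
Proof.
rewrite (eq_bigr (fun w : (size u).-tuple (letter r) =>
   if (rank u <= rank v)%N then npaths (rank v - rank u) (tval w) v else 0%N)); last first.
  by move=> w /eqP sw; rewrite /dpaths -(rank_s _ (tval w)) sw.
rewrite /dpaths rank_s; case: ifP => h; last by rewrite big1 // mulr0.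
have K := key r u (rank v - rank u) v.
set S := (\sum_(w | _) _)%N in K *; set N := npaths _ u _ in K *.
have rpos : (0 < r)%N by apply: leq_trans hr.
have ep : (0 < r ^ ntwos u)%N by rewrite expn_gt0 rpos.
case: (leqP (ntwos u) (ntwos v)) => hd.
  rewrite subzn //.
  have -> : S = (r ^ (ntwos v - ntwos u) * N)%N.
    apply/eqP; rewrite -(eqn_pmul2r ep).
    by rewrite K mulnAC -expnD subnK.
  by rewrite natrM natrX.
have N0 : N = 0%N by rewrite /N npaths_twos // ntwos_s.
have S0 : S = 0%N.
  by apply/eqP; rewrite -(eqn_pmul2r ep) mul0n K N0 muln0.
by rewrite S0 N0 mulr0.
Qed.
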